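(* Let $a\in\C\setminus\{0\}$ and let $t_i=\sum_{n\ge0}t_{i,n}q^n\in\C[[q]]$, $i=1,2,3$, be formal power series satisfying $$\dot t_1=t_1^2-\tfrac1{12}t_2,\qquad \dot t_2=4t_1t_2-6t_3,\qquad \dot t_3=6t_1t_3-\tfrac13t_2^2,\qquad\text{where }\dot{}=a\,q\frac{\partial}{\partial q},$$ and assume $(t_{1,1},t_{2,1},t_{3,1})\neq(0,0,0)$. Put $b=a/12$. Then $(t_{1,0},t_{2,0},t_{3,0})=(b,12b^2,8b^3)$ and there is $c\in\C\setminus\{0\}$ such that $$t_1=b\,E_2(cq),\qquad t_2=12b^2\,E_4(cq),\qquad t_3=8b^3\,E_6(cq),$$ where $E_{2k}(q)=1+\beta_k\sum_{n\ge1}\big(\sum_{d\mid n}d^{2k-1}\big)q^n$ with $(\beta_1,\beta_2,\beta_3)=(-24,240,-504)$. *)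

(* Defs.v *)
(* Formal power series over a field R are represented by
   their coefficient sequences  nat -> R. *)
From HB Require Import structures.
From mathcomp Require Import all_boot all_order all_algebra.
Set Implicit Arguments. Unset Strict Implicit. Unset Printing Implicit Defensive.
Import Order.TTheory GRing.Theory Num.Theory.
Local Open Scope ring_scope.

Definition psmul (R : nzRingType) (f g : nat -> R) : nat -> R :=
  fun n => \sum_(i < n.+1) f i * g (n - i)%N.

(* The derivation  a q d/dq  on coefficient sequences: n-th coeff a * n * f_n *)
Definition psder (R : nzRingType) (a : R) (f : nat -> R) : nat -> R :=
  fun n => a * n%:R * f n.

(* f(c q): n-th coefficient c^n f_n *)
Definition psresc (R : nzRingType) (c : R) (f : nat -> R) : nat -> R :=
  fun n => c ^+ n * f n.

Definition sigma (k n : nat) : nat := \sum_(d <- divisors n) d ^ k.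

Definition Eis (R : nzRingType) (beta : R) (k : nat) : nat -> R :=
  fun n => if n == 0%N then 1 else beta * (sigma (2 * k - 1) n)%:R.

Definition E2 (R : nzRingType) : nat -> R := Eis (- 24) 1.
Definition E4 (R : nzRingType) : nat -> R := Eis 240 2.
Definition E6 (R : nzRingType) : nat -> R := Eis (- 504) 3.

(* Main.v *)
Require Import Defs.
From HB Require Import structures.
From mathcomp Require Import all_boot all_order all_algebra.
From mathcomp Require Import ring lra zify.
Import Order.TTheory GRing.Theory Num.Theory.
Local Open Scope ring_scope.
Set Implicit Arguments. Unset Strict Implicit. Unset Printing Implicit Defensive.

Section Count.
Variable R : numFieldType.
Implicit Types F : nat -> R.

Lemma sum_vanish_range F a N K : (N <= K)%N -> (forall x, (N < x)%N -> F x = 0) ->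
  \sum_(a <= x < K.+1) F x = \sum_(a <= x < N.+1) F x.
Proof.
move=> NK F0; case: (leqP a N.+1) => aN.
  rewrite (@big_cat_nat _ _ _ N.+1 a K.+1) //=.
  by rewrite [X in _ + X]big1_seq ?addr0 // => i /andP [_]; rewrite mem_index_iota => /andP [] + _; apply: F0.
rewrite [RHS]big_geq; last exact: ltnW.
by rewrite big1_seq // => i /andP [_]; rewrite mem_index_iota => /andP [ai _]; apply: F0; apply: ltnW; exact: leq_trans aN ai.
Qed.

Lemma sum_ind_eq F a b c : \sum_(a <= y < b) (c == y)%:R * F y = if (a <= c < b)%N then F c else 0.
Proof.
rewrite -(@big_nat1_eq R 0 +%R F c a b) big_mkcond /=; apply: eq_bigr => i _.
by rewrite eq_sym; case: eqP => _; rewrite ?mul1r ?mul0r.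
Qed.

Lemma sum_shift F N y : (forall x, (N < x)%N -> F x = 0) ->
  \sum_(1 <= Y < N.+1) F (y + Y)%N = \sum_(1 <= x < N.+1) (y < x)%:R * F x.
Proof.
move=> F0.
have -> : \sum_(1 <= Y < N.+1) F (y + Y)%N = \sum_(1 + y <= x < N.+1 + y) F x.
  by rewrite big_addn addnK; apply: eq_bigr => i _; rewrite addnC.
rewrite -(@sum_vanish_range _ _ N (N + y)) ?leq_addr //; last first.
  by move=> x Nx; rewrite F0 // mulr0.
rewrite [RHS](@big_cat_nat _ _ _ (1 + y)) //=; last by rewrite add1n ltnS leq_addl.
rewrite [X in _ = X + _]big1_seq ?add0r; last first.
  by move=> i /andP [_]; rewrite mem_index_iota ltnS => /andP [_ iy]; rewrite ltnNge iy mul0r.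
rewrite addSn -addSn addnC; apply: eq_big_nat => i /andP [yi _].
by rewrite yi mul1r.
Qed.


Lemma sum_eq_dvd k M N : (0 < k)%N -> (0 < M)%N -> (M <= N)%N ->
  \sum_(1 <= x < N.+1) (k * x == M)%N%:R = (k %| M)%N%:R :> R.
Proof.
move=> k0 M0 MN; case: (boolP (k %| M)%N) => kM.
  have -> : \sum_(1 <= x < N.+1) (k * x == M)%N%:R =
            \sum_(1 <= x < N.+1) (M %/ k == x)%N%:R * (1 : R).
    apply: eq_bigr => x _; rewrite mulr1 -{1}(divnK kM) [(M %/ k * k)%N]mulnC.
    by rewrite eqn_pmul2l // eq_sym.
  rewrite sum_ind_eq divn_gt0 // (dvdn_leq M0 kM) /= ltnS.
  by rewrite (leq_trans (leq_div M k) MN).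
rewrite big1 // => x _; case: eqP => // Ex; exfalso; move/negP: kM; apply.
by rewrite -Ex dvdn_mulr.
Qed.

Definition cnt N m n : R :=
  \sum_(1 <= x < N.+1) \sum_(1 <= y < N.+1) (m * x + n * y == N)%N%:R.

Lemma cnt_sym N m n : cnt N m n = cnt N n m.
Proof.
rewrite /cnt exchange_big /=; apply: eq_bigr => x _; apply: eq_bigr => y _.
by rewrite addnC.
Qed.

Lemma cnt_rec N m n : (0 < N)%N -> (0 < m)%N -> (0 < n)%N ->
  cnt N m n = (m + n %| N)%N%:R + cnt N (m + n) m + cnt N (m + n) n.
Proof.
move=> N0 m0 n0; rewrite /cnt.
have sp : forall x y, (m * x + n * y == N)%N%:R =
   (x == y)%N%:R * (m * x + n * y == N)%N%:R + (y < x)%:R * (m * x + n * y == N)%N%:R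
   + (x < y)%:R * (m * x + n * y == N)%N%:R :> R.
  by move=> x y; case: (ltngtP x y) => _; rewrite ?mul0r ?mul1r ?add0r ?addr0.
under eq_bigr do under eq_bigr do rewrite sp.
under eq_bigr do rewrite !big_split /=.
rewrite !big_split /=; congr (_ + _ + _).
- rewrite -(sum_eq_dvd (ltn_addr n m0) N0 (leqnn N)).
  apply: eq_big_nat => x /andP [x1 xN]; rewrite sum_ind_eq x1 xN.
  by rewrite mulnDl.
- rewrite exchange_big /=; apply: eq_bigr => y _.
  rewrite -sum_shift; last first.
    move=> x Nx; case: eqP; rewrite ?mulr0 // => E; exfalso.
    have : (x <= m * x)%N by rewrite leq_pmull.
    by rewrite -ltnS; lia.
  by apply: eq_bigr => Y _; congr (_ == _)%:R; rewrite mulnDr mulnDl; lia.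
- apply: eq_bigr => x _.
  rewrite -sum_shift; last first.
    move=> y Ny; case: eqP; rewrite ?mulr0 // => E; exfalso.
    have : (y <= n * y)%N by rewrite leq_pmull.
    lia.
  by apply: eq_bigr => Y _; congr (_ == _)%:R; rewrite mulnDr mulnDl; lia.
Qed.


Lemma cnt_big N A B : (N < A)%N -> cnt N A B = 0.
Proof.
move=> NA; rewrite /cnt big1_seq // => x /andP [_]; rewrite mem_index_iota => /andP [x1 _].
rewrite big1 // => y _; case: eqP => // E; exfalso.
have : (A <= A * x)%N by rewrite leq_pmulr.
lia.
Qed.

Definition TS N (G : nat -> nat -> R) : R :=
  \sum_(1 <= m < N.+1) \sum_(1 <= n < N.+1) G m n * cnt N m n.

Definition Dsum N (G : nat -> nat -> R) : R :=
  \sum_(1 <= d < N.+1) (d %| N)%N%:R * \sum_(1 <= m < N.+1) (m < d)%N%:R * G m (d - m)%N.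

Definition Lsum N (H : nat -> nat -> R) : R :=
  \sum_(1 <= A < N.+1) \sum_(1 <= B < N.+1) (B < A)%N%:R * H A B * cnt N A B.

Lemma TS_key N G : (0 < N)%N ->
  TS N G = Dsum N G + Lsum N (fun A B => G B (A - B)%N + G (A - B)%N B).
Proof.
move=> N0; rewrite /TS.
have -> : \sum_(1 <= m < N.+1) \sum_(1 <= n < N.+1) G m n * cnt N m n =
   \sum_(1 <= m < N.+1) \sum_(1 <= n < N.+1) G m n * (m + n %| N)%N%:R
 + \sum_(1 <= m < N.+1) \sum_(1 <= n < N.+1) G m n * cnt N (m + n) m
 + \sum_(1 <= m < N.+1) \sum_(1 <= n < N.+1) G m n * cnt N (m + n) n.
  rewrite -!big_split /=; apply: eq_big_nat => m /andP [m1 _].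
  rewrite -!big_split /=; apply: eq_big_nat => n /andP [n1 _].
  by rewrite cnt_rec // !mulrDr.
rewrite -addrA; congr (_ + _).
  rewrite /Dsum.
  have -> : \sum_(1 <= m < N.+1) \sum_(1 <= n < N.+1) G m n * (m + n %| N)%N%:R =
     \sum_(1 <= m < N.+1) \sum_(1 <= d < N.+1) (m < d)%N%:R * ((d %| N)%N%:R * G m (d - m)%N).
    apply: eq_bigr => m _; rewrite -sum_shift; last first.
      move=> d Nd; have /negbTE -> : ~~ (d %| N)%N.
        by apply/negP => /(dvdn_leq N0); rewrite leqNgt Nd.
      by rewrite mul0r.
    by apply: eq_bigr => n _; rewrite addKn mulrC.
  rewrite exchange_big /=; apply: eq_bigr => d _; rewrite mulr_sumr.
  by apply: eq_bigr => m _; rewrite mulrCA.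
rewrite /Lsum.
have -> : \sum_(1 <= m < N.+1) \sum_(1 <= n < N.+1) G m n * cnt N (m + n) m =
     \sum_(1 <= m < N.+1) \sum_(1 <= A < N.+1) (m < A)%N%:R * (G m (A - m)%N * cnt N A m).
  apply: eq_bigr => m _; rewrite -sum_shift; last first.
    by move=> A NA; rewrite cnt_big // mulr0.
  by apply: eq_bigr => n _; rewrite addKn.
have -> : \sum_(1 <= m < N.+1) \sum_(1 <= n < N.+1) G m n * cnt N (m + n) n =
     \sum_(1 <= n < N.+1) \sum_(1 <= A < N.+1) (n < A)%N%:R * (G (A - n)%N n * cnt N A n).
  rewrite exchange_big /=; apply: eq_bigr => n _; rewrite -sum_shift; last first.
    by move=> A NA; rewrite cnt_big // mulr0.
  by apply: eq_bigr => m _; rewrite addKn addnC.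
rewrite (exchange_big _ _ (index_iota 1 N.+1)) /=.
rewrite [X in _ + X](exchange_big _ _ (index_iota 1 N.+1)) /=.
rewrite -big_split /=; apply: eq_bigr => A _; rewrite -big_split /=; apply: eq_bigr => B _.
by rewrite !mulrDr !mulrDl !mulrA.
Qed.


Lemma Lsum_ext N H1 H2 : (forall A B, (B < A)%N -> H1 A B = H2 A B) -> Lsum N H1 = Lsum N H2.
Proof.
move=> E; rewrite /Lsum; apply: eq_bigr => A _; apply: eq_bigr => B _.
by case: ltnP => BA; rewrite ?mul0r // E.
Qed.

Definition Diag N (H : nat -> nat -> R) : R := \sum_(1 <= A < N.+1) H A A * cnt N A A.

Lemma TS_sym N H : (forall a b, H a b = H b a) -> TS N H = 2 * Lsum N H + Diag N H.
Proof.
move=> Hs; have -> : 2 * Lsum N H = Lsum N H + Lsum N H by ring.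
rewrite /TS /Lsum /Diag.
have sp : forall A B, H A B * cnt N A B =
   (B < A)%N%:R * H A B * cnt N A B + (A < B)%N%:R * H A B * cnt N A B
   + (A == B)%N%:R * (H A B * cnt N A B).
  by move=> A B; case: (ltngtP A B) => _; rewrite ?mul0r ?mul1r ?add0r ?addr0.
under eq_bigr do under eq_bigr do rewrite sp.
under eq_bigr do rewrite !big_split /=.
rewrite !big_split /=; congr (_ + _ + _).
  rewrite exchange_big /=; apply: eq_bigr => A _; apply: eq_bigr => B _.
  by rewrite Hs cnt_sym.
by apply: eq_big_nat => A /andP [A1 AN]; rewrite sum_ind_eq A1 AN.
Qed.

Lemma TS_lin N (a b : R) (F1 F2 : nat -> nat -> R) :
  TS N (fun m n => a * F1 m n + b * F2 m n) = a * TS N F1 + b * TS N F2.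
Proof.
rewrite /TS !mulr_sumr -big_split /=; apply: eq_bigr => m _.
rewrite !mulr_sumr -big_split /=; apply: eq_bigr => n _.
by rewrite mulrDl !mulrA.
Qed.

Lemma TS_ext N (F1 F2 : nat -> nat -> R) : (forall m n, (0 < m)%N -> (0 < n)%N -> F1 m n = F2 m n) ->
  TS N F1 = TS N F2.
Proof.
move=> E; rewrite /TS; apply: eq_big_nat => m /andP [m1 _].
by apply: eq_big_nat => n /andP [n1 _]; rewrite E.
Qed.

Lemma cnt_diag N A : (0 < N)%N -> (0 < A)%N ->
  cnt N A A = (A %| N)%N%:R * ((N %/ A)%N%:R - 1).
Proof.
move=> N0 A0; rewrite /cnt.
have E1 : forall x, (1 <= x)%N -> \sum_(1 <= y < N.+1) (A * x + A * y == N)%N%:R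
        = ((A * x < N)%N && (A %| N)%N)%:R :> R.
  move=> x x1; case: (ltnP (A * x) N) => AxN /=.
    rewrite -(dvdn_subl (ltnW AxN) (dvdn_mulr x (dvdnn A))).
    rewrite -(@sum_eq_dvd A (N - A * x) N) ?subn_gt0 ?leq_subr //.
    apply: eq_bigr => y _; congr (_%:R); apply/eqP/eqP; lia.
  rewrite big1_seq // => y /andP [_]; rewrite mem_index_iota => /andP [y1 _].
  have : (A <= A * y)%N by rewrite leq_pmulr.
  by case: eqP => //; lia.
rewrite (eq_big_nat _ _ (fun x xr => E1 x (proj1 (andP xr)))).
case: (boolP (A %| N)%N) => AN; last first.
  by rewrite mul0r big1 // => x _; rewrite andbF.
rewrite mul1r.
have -> : \sum_(1 <= x < N.+1) ((A * x < N)%N && true)%:R =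
          \sum_(1 <= x < N.+1) (x < N %/ A)%N%:R :> R.
  apply: eq_bigr => x _; rewrite andbT; congr (_%:R).
  by rewrite -{1}(divnK AN) [(N %/ A * A)%N]mulnC ltn_pmul2l.
have q1 : (0 < N %/ A)%N by rewrite divn_gt0 // dvdn_leq.
have qN : (N %/ A <= N)%N by rewrite leq_div.
rewrite (@big_cat_nat _ _ _ (N %/ A)) //=; last exact: leqW.
rewrite [X in _ + X]big1_seq ?addr0; last first.
  by move=> x /andP [_]; rewrite mem_index_iota => /andP [qx _]; rewrite ltnNge qx.
rewrite (eq_big_nat _ _ (F2 := fun _ => (1 : R))); last by move=> x /andP [_ ->].
rewrite sumr_const_nat natrB //.
Qed.

Definition sigR k N : R := (sigma k N)%:R.

Lemma sigR_sum k N : (0 < N)%N ->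
  sigR k N = \sum_(1 <= d < N.+1) (d %| N)%N%:R * d%:R ^+ k.
Proof.
move=> N0; rewrite /sigR /sigma natr_sum.
have P : perm_eq (divisors N) [seq d <- index_iota 1 N.+1 | (d %| N)%N].
  apply: uniq_perm; first exact: divisors_uniq.
    by rewrite filter_uniq // iota_uniq.
  move=> d; rewrite mem_filter mem_index_iota -dvdn_divisors //.
  case: (boolP (d %| N)%N) => //= dN.
  have d0 : (0 < d)%N by apply: dvdn_gt0 dN.
  by rewrite d0 ltnS dvdn_leq.
rewrite (perm_big _ P) big_filter big_mkcond /=; apply: eq_bigr => d _.
by case: (d %| N)%N; rewrite ?mul1r ?mul0r // natrX.
Qed.


Lemma TS_poly N (g H : R -> R -> R) : (0 < N)%N ->
  (forall a b, H a b = H b a) -> (forall a b, g b (a - b) + g (a - b) b = H a b) ->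
  TS N (fun m n => g m%:R n%:R) = Dsum N (fun m n => g m%:R n%:R)
    + (TS N (fun m n => H m%:R n%:R) - Diag N (fun m n => H m%:R n%:R)) / 2.
Proof.
move=> N0 Hs gH; rewrite TS_key //.
rewrite (@Lsum_ext _ _ (fun A B => H A%:R B%:R)); last first.
  by move=> A B BA; rewrite natrB ?gH //; exact: ltnW.
rewrite (@TS_sym N (fun m n => H m%:R n%:R)); last by move=> a b; rewrite Hs.
congr (_ + _); rewrite addrK mulrC mulrA mulVf ?mul1r //.
by rewrite pnatr_eq0.
Qed.

Lemma Dsum_tel N (g : R -> R -> R) (Rt : R -> R -> R) (Q : R -> R) :
  (forall m d, Rt (m + 1) d - Rt m d = g m (d - m)) ->
  (forall d, Rt d d - Rt 1 d = Q d) ->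
  Dsum N (fun m n => g m%:R n%:R) = \sum_(1 <= d < N.+1) (d %| N)%N%:R * Q d%:R.
Proof.
move=> Et EQ; rewrite /Dsum; apply: eq_big_nat => d /andP [d1 dN]; congr (_ * _).
rewrite (@big_cat_nat _ _ _ d) //=; last exact: ltnW.
rewrite [X in _ + X]big1_seq ?addr0; last first.
  by move=> m /andP [_]; rewrite mem_index_iota => /andP [dm _]; rewrite ltnNge dm mul0r.
rewrite (@eq_big_nat _ _ _ _ _ _ (fun m => Rt (m.+1)%:R d%:R - Rt m%:R d%:R)); last first.
  by move=> m /andP [_ md]; rewrite md mul1r natrB ?(ltnW md) // -Et -addn1 natrD.
by rewrite telescope_sumr // EQ.
Qed.

Lemma divsum4 N (c1 c2 c3 c4 : R) k1 k2 k3 k4 : (0 < N)%N ->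
  \sum_(1 <= d < N.+1) (d %| N)%N%:R * (c1 * d%:R ^+ k1 + c2 * d%:R ^+ k2 + c3 * d%:R ^+ k3 + c4 * d%:R ^+ k4)
  = c1 * sigR k1 N + c2 * sigR k2 N + c3 * sigR k3 N + c4 * sigR k4 N.
Proof.
move=> N0; rewrite !sigR_sum // !mulr_sumr -!big_split /=; apply: eq_bigr => d _.
move: (d%:R ^+ k1) (d%:R ^+ k2) (d%:R ^+ k3) (d%:R ^+ k4) => X1 X2 X3 X4.
by ring.
Qed.

Lemma Diag_pow N (H : nat -> nat -> R) c k : (0 < N)%N ->
  (forall A, H A A = c * A%:R ^+ k.+1) ->
  Diag N H = c * (N%:R * sigR k N - sigR k.+1 N).
Proof.
move=> N0 HA; rewrite /Diag !sigR_sum // mulr_sumr -sumrB mulr_sumr.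
apply: eq_big_nat => A /andP [A1 AN]; rewrite HA cnt_diag //.
case: (boolP (A %| N)%N) => dA; rewrite ?mul0r ?mulr0 ?subrr ?mulr0 //.
have E : N%:R = (N %/ A)%N%:R * A%:R :> R by rewrite -natrM divnK.
rewrite E !exprS; move: (A%:R ^+ k) => X; ring.
Qed.


Definition conv i j N : R := \sum_(1 <= k < N) sigR i k * sigR j (N - k).

Lemma sig_as_sum i k N : (0 < k)%N -> (k <= N)%N ->
  sigR i k = \sum_(1 <= m < N.+1) \sum_(1 <= x < N.+1) m%:R ^+ i * (m * x == k)%N%:R.
Proof.
move=> k0 kN; rewrite sigR_sum //.
have -> : \sum_(1 <= m < N.+1) \sum_(1 <= x < N.+1) m%:R ^+ i * (m * x == k)%N%:R =
          \sum_(1 <= m < N.+1) (m %| k)%N%:R * m%:R ^+ i :> R.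
  by apply: eq_big_nat => m /andP [m1 _]; rewrite -mulr_sumr sum_eq_dvd // mulrC.
rewrite [RHS](@sum_vanish_range _ 1 k N) // => m km.
have /negbTE -> : ~~ (m %| k)%N by apply/negP => /(dvdn_leq k0); rewrite leqNgt km.
by rewrite mul0r.
Qed.

Lemma ind_split m n x y N : (0 < m)%N -> (0 < n)%N -> (0 < x)%N -> (0 < y)%N ->
  (m * x + n * y == N)%N%:R = \sum_(1 <= k < N) (m * x == k)%N%:R * (n * y == N - k)%N%:R :> R.
Proof.
move=> m0 n0 x0 y0.
have mx0 : (0 < m * x)%N by rewrite muln_gt0 m0.
have ny0 : (0 < n * y)%N by rewrite muln_gt0 n0.
rewrite (@eq_big_nat _ _ _ _ _ _ (fun k => (m * x == k)%N%:R * (m * x + n * y == N)%N%:R)); last first.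
  move=> k /andP [k1 kN]; case: eqP => [<-|]; rewrite ?mul0r ?mul1r //.
  by congr (_%:R); apply/eqP/eqP; lia.
rewrite (sum_ind_eq (fun _ => (m * x + n * y == N)%N%:R)).
case: eqP => E; last by case: ifP.
have -> // : (1 <= m * x < N)%N by apply/andP; split; lia.
Qed.

Lemma TS_mono i j N : (0 < N)%N ->
  TS N (fun m n => m%:R ^+ i * n%:R ^+ j) = conv i j N.
Proof.
move=> N0; rewrite /TS /conv.
have -> : \sum_(1 <= k < N) sigR i k * sigR j (N - k) =
  \sum_(1 <= k < N) \sum_(1 <= m < N.+1) \sum_(1 <= x < N.+1) \sum_(1 <= n < N.+1) \sum_(1 <= y < N.+1)
   (m%:R ^+ i * (m * x == k)%N%:R) * (n%:R ^+ j * (n * y == N - k)%N%:R).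
  apply: eq_big_nat => k /andP [k1 kN].
  rewrite (@sig_as_sum i k N k1 (ltnW kN)) (@sig_as_sum j (N - k) N); last exact: leq_subr.
    2: by rewrite subn_gt0.
  rewrite mulr_suml; apply: eq_bigr => m _; rewrite mulr_suml; apply: eq_bigr => x _.
  by rewrite mulr_sumr; apply: eq_bigr => n _; rewrite mulr_sumr.
rewrite [RHS]exchange_big /=; apply: eq_big_nat => m /andP [m1 _].
rewrite [RHS]exchange_big /=.
under [RHS]eq_bigr do rewrite exchange_big /=.
under [RHS]eq_bigr do under eq_bigr do rewrite exchange_big /=.
rewrite [RHS]exchange_big /=; apply: eq_big_nat => n /andP [n1 _].
rewrite /cnt mulr_sumr; apply: eq_big_nat => x /andP [x1 _].
rewrite mulr_sumr; apply: eq_big_nat => y /andP [y1 _].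
rewrite (ind_split N m1 n1 x1 y1) mulr_sumr; apply: eq_bigr => k _.
move: (m%:R ^+ i) (n%:R ^+ j) => X Y; ring.
Qed.


Lemma conv_from N i j (g H Rt : R -> R -> R) (Q : R -> R) c k : (0 < N)%N ->
  (forall a b, H a b = H b a) -> (forall a b, g b (a - b) + g (a - b) b = H a b) ->
  (forall a b, a ^+ i * b ^+ j = g a b - H a b / 2) ->
  (forall a d, Rt (a + 1) d - Rt a d = g a (d - a)) ->
  (forall d, Rt d d - Rt 1 d = Q d) ->
  (forall d, H d d = c * d ^+ k.+1) ->
  conv i j N = \sum_(1 <= d < N.+1) (d %| N)%N%:R * Q d%:R
               - c * (N%:R * sigR k N - sigR k.+1 N) / 2.
Proof.
move=> N0 Hs gH Em Et EQ HD.
rewrite -TS_mono //.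
rewrite (@TS_ext N _ (fun m n => 1 * g m%:R n%:R + (- (1/2)) * H m%:R n%:R)); last first.
  by move=> m n _ _; rewrite Em mul1r mulNr mulrC mul1r.
rewrite TS_lin (TS_poly N0 Hs gH) (Dsum_tel N Et EQ) (@Diag_pow N _ c k) //.
by field.
Qed.


Definition g11 := fun a b : R => ((1/2) * b^+2 + (1/2) * a^+1 * b^+1 + (1/2) * a^+2).
Definition H11 := fun a b : R => (1 * b^+2 - 1 * a^+1 * b^+1 + 1 * a^+2).
Definition Rt11 := fun a b : R => ((1/12) * a^+1 + (1/4) * a^+1 * b^+1 + (1/2) * a^+1 * b^+2 - (1/4) * a^+2 - (1/4) * a^+2 * b^+1 + (1/6) * a^+3).
Definition Q11 := fun d : R => (1/12) * d^+1 + (-1/2) * d^+2 + (5/12) * d^+3 + (0/1) * d^+0.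

Lemma conv11_raw N : (0 < N)%N -> conv 1 1 N =
  \sum_(1 <= d < N.+1) (d %| N)%N%:R * Q11 d%:R - (1/1) * (N%:R * sigR 1 N - sigR 2 N) / 2.
Proof.
move=> N0; apply: (@conv_from N _ _ g11 H11 Rt11 Q11) => //.
all: by move=> *; rewrite /g11 /H11 /Rt11 /Q11; field.
Qed.

Definition g13 := fun a b : R => ((1/8) * b^+4 + (3/4) * a^+1 * b^+3 + (3/8) * a^+2 * b^+2 - (1/4) * a^+3 * b^+1 + (1/8) * a^+4).
Definition H13 := fun a b : R => ((1/4) * b^+4 - (1/2) * a^+1 * b^+3 + (3/4) * a^+2 * b^+2 - (1/2) * a^+3 * b^+1 + (1/4) * a^+4).
Definition Rt13 := fun a b : R => (- (1/240) * a^+1 - (3/16) * a^+1 * b^+2 - (1/8) * a^+1 * b^+3 + (1/8) * a^+1 * b^+4 + (3/16) * a^+2 * b^+1 + (9/16) * a^+2 * b^+2 + (1/8) * a^+2 * b^+3 + (1/24) * a^+3 - (3/8) * a^+3 * b^+1 - (3/8) * a^+3 * b^+2 - (1/16) * a^+4 + (3/16) * a^+4 * b^+1 + (1/40) * a^+5).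
Definition Q13 := fun d : R => (-1/240) * d^+1 + (1/24) * d^+3 + (-1/8) * d^+4 + (7/80) * d^+5.

Lemma conv13_raw N : (0 < N)%N -> conv 1 3 N =
  \sum_(1 <= d < N.+1) (d %| N)%N%:R * Q13 d%:R - (1/4) * (N%:R * sigR 3 N - sigR 4 N) / 2.
Proof.
move=> N0; apply: (@conv_from N _ _ g13 H13 Rt13 Q13) => //.
all: by move=> *; rewrite /g13 /H13 /Rt13 /Q13; field.
Qed.

Definition g15 := fun a b : R => ((1/12) * b^+6 + (3/4) * a^+1 * b^+5 + (5/24) * a^+2 * b^+4 + (5/24) * a^+4 * b^+2 - (1/4) * a^+5 * b^+1 + (1/12) * a^+6).
Definition H15 := fun a b : R => ((1/6) * b^+6 - (1/2) * a^+1 * b^+5 + (5/12) * a^+2 * b^+4 + (5/12) * a^+4 * b^+2 - (1/2) * a^+5 * b^+1 + (1/6) * a^+6).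
Definition Rt15 := fun a b : R => ((1/504) * a^+1 + (23/144) * a^+1 * b^+2 - (55/144) * a^+1 * b^+4 - (1/8) * a^+1 * b^+5 + (1/12) * a^+1 * b^+6 - (7/48) * a^+2 * b^+1 + (5/4) * a^+2 * b^+3 + (55/48) * a^+2 * b^+4 + (1/8) * a^+2 * b^+5 - (1/72) * a^+3 - (115/72) * a^+3 * b^+2 - (5/2) * a^+3 * b^+3 - (55/72) * a^+3 * b^+4 + (35/48) * a^+4 * b^+1 + (115/48) * a^+4 * b^+2 + (5/4) * a^+4 * b^+3 + (1/24) * a^+5 - (7/8) * a^+5 * b^+1 - (23/24) * a^+5 * b^+2 - (1/24) * a^+6 + (7/24) * a^+6 * b^+1 + (1/84) * a^+7).
Definition Q15 := fun d : R => (1/504) * d^+1 + (1/24) * d^+5 + (-1/12) * d^+6 + (5/126) * d^+7.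

Lemma conv15_raw N : (0 < N)%N -> conv 1 5 N =
  \sum_(1 <= d < N.+1) (d %| N)%N%:R * Q15 d%:R - (1/6) * (N%:R * sigR 5 N - sigR 6 N) / 2.
Proof.
move=> N0; apply: (@conv_from N _ _ g15 H15 Rt15 Q15) => //.
all: by move=> *; rewrite /g15 /H15 /Rt15 /Q15; field.
Qed.

Definition g33 := fun a b : R => ((1/4) * a^+2 * b^+4 + (1/2) * a^+3 * b^+3 + (1/4) * a^+4 * b^+2).
Definition H33 := fun a b : R => ((1/2) * a^+2 * b^+4 - 1 * a^+3 * b^+3 + (1/2) * a^+4 * b^+2).
Definition Rt33 := fun a b : R => (- (1/120) * a^+1 * b^+2 + (1/24) * a^+1 * b^+4 - (1/8) * a^+2 * b^+3 - (1/8) * a^+2 * b^+4 + (1/12) * a^+3 * b^+2 + (1/4) * a^+3 * b^+3 + (1/12) * a^+3 * b^+4 - (1/8) * a^+4 * b^+2 - (1/8) * a^+4 * b^+3 + (1/20) * a^+5 * b^+2).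
Definition Q33 := fun d : R => (-1/120) * d^+3 + (1/120) * d^+7 + (0/1) * d^+0 + (0/1) * d^+0.

Lemma conv33_raw N : (0 < N)%N -> conv 3 3 N =
  \sum_(1 <= d < N.+1) (d %| N)%N%:R * Q33 d%:R - (0/1) * (N%:R * sigR 5 N - sigR 6 N) / 2.
Proof.
move=> N0; apply: (@conv_from N _ _ g33 H33 Rt33 Q33) => //.
all: by move=> *; rewrite /g33 /H33 /Rt33 /Q33; field.
Qed.

End Count.


Section Eis.
Variable R : numFieldType.

Lemma psmul_split (f g : nat -> R) n : (0 < n)%N ->
  psmul f g n = f 0%N * g n + f n * g 0%N + \sum_(1 <= i < n) f i * g (n - i)%N.
Proof.
move=> n0; rewrite /psmul -(big_mkord xpredT (fun i => f i * g (n - i)%N)).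
rewrite big_ltn // big_nat_recr //= subn0 subnn; ring.
Qed.

Lemma psmul_Eis (b1 b2 : R) k1 k2 n : (0 < n)%N ->
  psmul (Eis b1 k1) (Eis b2 k2) n =
  b2 * sigR R (2 * k2 - 1) n + b1 * sigR R (2 * k1 - 1) n
  + b1 * b2 * conv R (2 * k1 - 1) (2 * k2 - 1) n.
Proof.
move=> n0; rewrite psmul_split // /Eis /= (gtn_eqF n0) mul1r mulr1 /conv mulr_sumr.
congr (_ + _); apply: eq_big_nat => i /andP [i1 iN].
have i0 : (0 < n - i)%N by rewrite subn_gt0.
by rewrite (gtn_eqF i1) (gtn_eqF i0) /sigR; ring.
Qed.

End Eis.

Section Ode.
Variable R : numFieldType.

Lemma psmul0 (f g : nat -> R) : psmul f g 0 = f 0%N * g 0%N.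
Proof. by rewrite /psmul big_ord1. Qed.

Lemma E_ode1 n : 12 * n%:R * E2 R n = psmul (E2 R) (E2 R) n - E4 R n.
Proof.
case: (posnP n) => [->|n0].
  by rewrite psmul0 /E2 /E4 /Eis /= mulr0 mul0r mulr1 subrr.
rewrite psmul_Eis // /E2 /E4 /Eis (gtn_eqF n0).
have -> : (2 * 1 - 1 = 1)%N by []. have -> : (2 * 2 - 1 = 3)%N by [].
rewrite conv11_raw // /Q11 divsum4 //.
rewrite /sigR /=; by field.
Qed.

Lemma E_ode2 n : 3 * n%:R * E4 R n = psmul (E2 R) (E4 R) n - E6 R n.
Proof.
case: (posnP n) => [->|n0].
  by rewrite psmul0 /E2 /E4 /E6 /Eis /= mulr0 mul0r mulr1 subrr.
rewrite psmul_Eis // /E2 /E4 /E6 /Eis (gtn_eqF n0).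
have -> : (2 * 1 - 1 = 1)%N by []. have -> : (2 * 2 - 1 = 3)%N by [].
have -> : (2 * 3 - 1 = 5)%N by [].
rewrite conv13_raw // /Q13 divsum4 //.
rewrite /sigR /=; by field.
Qed.

Lemma E_ode3 n : 2 * n%:R * E6 R n = psmul (E2 R) (E6 R) n - psmul (E4 R) (E4 R) n.
Proof.
case: (posnP n) => [->|n0].
  by rewrite !psmul0 /E2 /E4 /E6 /Eis /= mulr0 mul0r !mulr1 subrr.
rewrite !psmul_Eis // /E2 /E4 /E6 /Eis (gtn_eqF n0).
have -> : (2 * 1 - 1 = 1)%N by []. have -> : (2 * 2 - 1 = 3)%N by [].
have -> : (2 * 3 - 1 = 5)%N by [].
rewrite conv15_raw // conv33_raw // /Q15 /Q33 !divsum4 //.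
rewrite /sigR /=; by field.
Qed.

End Ode.

Section Final.
Variable R : numFieldType.

Lemma eq_from (x y u v k : R) : x = y -> u - v = k * (x - y) -> u = v.
Proof. by move=> -> E; apply/eqP; rewrite -subr_eq0 E subrr mulr0. Qed.

Lemma eq_from2 (x1 y1 x2 y2 u v k1 k2 : R) : x1 = y1 -> x2 = y2 ->
  u - v = k1 * (x1 - y1) + k2 * (x2 - y2) -> u = v.
Proof. by move=> -> -> E; apply/eqP; rewrite -subr_eq0 E !subrr !mulr0 addr0. Qed.

Lemma sys (s l x y z : R) :
  l * x = 2 * s * x - y / 12 ->
  l * y = 4 * s * y + 48 * s ^+ 2 * x - 6 * z ->
  l * z = 6 * s * z + 48 * s ^+ 3 * x - 8 * s ^+ 2 * y ->
  [/\ y = 12 * (2 * s - l) * x, z = (2 * (4 * s - l) * (2 * s - l) + 8 * s ^+ 2) * x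
    & 2 * l ^+ 2 * (l - 12 * s) * x = 0].
Proof.
move=> E1 E2 E3.
have hy : y = 12 * (2 * s - l) * x by apply: (eq_from (k := 12) E1); field; done.
have hz : z = (2 * (4 * s - l) * (2 * s - l) + 8 * s ^+ 2) * x.
  by rewrite hy in E2; apply: (eq_from (k := 1/6) E2); field.
split => //; rewrite hy hz in E3; apply: (eq_from (k := 1) E3); by field.
Qed.

Lemma psmul_resc (p q c : R) (f g u v : nat -> R) n :
  (forall k, u k = p * psresc c f k) -> (forall k, v k = q * psresc c g k) ->
  psmul u v n = p * q * (c ^+ n * psmul f g n).
Proof.
move=> hu hv; rewrite /psmul !mulr_sumr; apply: eq_bigr => i _.
rewrite hu hv /psresc.
have -> : c ^+ n = c ^+ i * c ^+ (n - i)%N by rewrite -exprD subnKC // -ltnS.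
move: (c ^+ i) (c ^+ (n - i)%N) => X Y; ring.
Qed.

Lemma U_odes (a b c : R) (u1 u2 u3 : nat -> R) : a = 12 * b ->
  (forall k, u1 k = b * psresc c (E2 R) k) ->
  (forall k, u2 k = 12 * b ^+ 2 * psresc c (E4 R) k) ->
  (forall k, u3 k = 8 * b ^+ 3 * psresc c (E6 R) k) ->
  forall n, [/\ psder a u1 n = psmul u1 u1 n - u2 n / 12,
    psder a u2 n = 4 * psmul u1 u2 n - 6 * u3 n &
    psder a u3 n = 6 * psmul u1 u3 n - psmul u2 u2 n / 3].
Proof.
move=> ab h1 h2 h3 n.
rewrite (psmul_resc n h1 h1) (psmul_resc n h1 h2) (psmul_resc n h1 h3) (psmul_resc n h2 h2).
rewrite /psder h1 h2 h3 /psresc ab.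
have o1 := E_ode1 R n; have o2 := E_ode2 R n; have o3 := E_ode3 R n.
split.
- apply: (eq_from (k := b ^+ 2 * c ^+ n) o1); by field.
- apply: (eq_from (k := 48 * b ^+ 3 * c ^+ n) o2); by field.
- apply: (eq_from (k := 48 * b ^+ 4 * c ^+ n) o3); by field.
Qed.

End Final.


Unset Implicit Arguments. Set Strict Implicit. Set Printing Implicit Defensive.

Theorem mainTheorem7 (C : numClosedFieldType) (a : C) (t1 t2 t3 : nat -> C) :
  a != 0 ->
  (forall n, psder a t1 n = psmul t1 t1 n - t2 n / 12) ->
  (forall n, psder a t2 n = 4 * psmul t1 t2 n - 6 * t3 n) ->
  (forall n, psder a t3 n = 6 * psmul t1 t3 n - psmul t2 t2 n / 3) ->
  (t1 1%N, t2 1%N, t3 1%N) != (0, 0, 0) ->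
  let b := a / 12 in
  (t1 0%N, t2 0%N, t3 0%N) = (b, 12 * b ^+ 2, 8 * b ^+ 3) /\
  exists2 c : C, c != 0 &
    forall n, [/\ t1 n = b * psresc c (@E2 C) n,
                  t2 n = 12 * b ^+ 2 * psresc c (@E4 C) n &
                  t3 n = 8 * b ^+ 3 * psresc c (@E6 C) n].
Proof.
move=> a0 h1 h2 h3 hne b.
have e10 := h1 0%N; have e20 := h2 0%N.
rewrite /psder !psmul0 mulr0n mulr0 mul0r in e10 e20.
have T2 : t2 0%N = 12 * t1 0%N ^+ 2 by apply: (eq_from (k := 12) e10); field.
rewrite T2 in e20.
have T3 : t3 0%N = 8 * t1 0%N ^+ 3 by apply: (eq_from (k := 1/6) e20); field.
have e11 := h1 1%N; have e21 := h2 1%N; have e31 := h3 1%N.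
rewrite /psder !psmul_split // !big_geq // !addr0 T2 T3 in e11 e21 e31.
have f1 : a * t1 1%N = 2 * t1 0%N * t1 1%N - t2 1%N / 12.
  by apply: (eq_from (k := 1) e11); field.
have f2 : a * t2 1%N = 4 * t1 0%N * t2 1%N + 48 * t1 0%N ^+ 2 * t1 1%N - 6 * t3 1%N.
  by apply: (eq_from (k := 1) e21); field.
have f3 : a * t3 1%N = 6 * t1 0%N * t3 1%N + 48 * t1 0%N ^+ 3 * t1 1%N - 8 * t1 0%N ^+ 2 * t2 1%N.
  by apply: (eq_from (k := 1) e31); field.
have [hy hz hk] := sys f1 f2 f3.
have x0 : t1 1%N != 0.
  by apply/eqP => x0; move: hne; rewrite hy hz x0 !mulr0 eqxx.
have two : (2 : C) != 0 by rewrite pnatr_eq0.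
have sb : t1 0%N = b.
  move/eqP: hk; rewrite !mulf_eq0 (negbTE x0) orbF (negbTE two) (negbTE a0) /=.
  by rewrite subr_eq0 => /eqP E; rewrite /b E; field.
have ab : a = 12 * b by rewrite /b; field.
have b0 : b != 0 by rewrite /b mulf_neq0 // invr_eq0 pnatr_eq0.
rewrite sb in T2 T3 hy hz.
split; first by rewrite sb T2 T3.
pose c := - t1 1%N / (24 * b).
have c0 : c != 0.
  by rewrite /c mulf_neq0 ?oppr_eq0 // invr_eq0 mulf_neq0 // pnatr_eq0.
apply: (ex_intro2 _ _ c c0).
pose u1 := fun k => b * psresc c (E2 C) k.
pose u2 := fun k => 12 * b ^+ 2 * psresc c (E4 C) k.
pose u3 := fun k => 8 * b ^+ 3 * psresc c (E6 C) k.
have U := @U_odes C a b c u1 u2 u3 ab (fun _ => erefl) (fun _ => erefl) (fun _ => erefl).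
have u10 : u1 0%N = b by rewrite /u1 /psresc /E2 /Eis /= expr0 !mulr1.
have u20 : u2 0%N = 12 * b ^+ 2 by rewrite /u2 /psresc /E4 /Eis /= expr0 !mulr1.
have u30 : u3 0%N = 8 * b ^+ 3 by rewrite /u3 /psresc /E6 /Eis /= expr0 !mulr1.
suff P : forall n, [/\ t1 n = u1 n, t2 n = u2 n & t3 n = u3 n] by [].
elim/ltn_ind => n IH.
case: n IH => [|[|n]] IH.
- by rewrite u10 u20 u30 sb T2 T3.
- rewrite /u1 /u2 /u3 /psresc /E2 /E4 /E6 /Eis /=.
  have sig1 : forall k, sigma k 1 = 1%N.
    by move=> k; rewrite /sigma (_ : divisors 1 = [:: 1]) // big_seq1 exp1n.
  rewrite !sig1.
  rewrite hy hz /c ab expr1.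
  by split; field.
set m := n.+2.
have m0 : (0 < m)%N by [].
have IHt : forall i, (0 < i)%N -> (i < m)%N ->
   [/\ t1 i = u1 i, t2 i = u2 i, t3 i = u3 i, t1 (m - i)%N = u1 (m - i)%N
     & t2 (m - i)%N = u2 (m - i)%N /\ t3 (m - i)%N = u3 (m - i)%N].
  move=> i i0 im; have [a1 a2 a3] := IH i im.
  have [b1 b2 b3] : [/\ t1 (m - i)%N = u1 (m - i)%N, t2 (m - i)%N = u2 (m - i)%N
                      & t3 (m - i)%N = u3 (m - i)%N].
    by apply: IH; rewrite ltn_subrL i0.
  by [].
have Mid : forall (f g f' g' : nat -> C),
   (forall i, (0 < i)%N -> (i < m)%N -> f i = f' i /\ g (m - i)%N = g' (m - i)%N) ->
   \sum_(1 <= i < m) f i * g (m - i)%N = \sum_(1 <= i < m) f' i * g' (m - i)%N.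
  move=> f g f' g' hfg; apply: eq_big_nat => i /andP [i1 im].
  by have [-> ->] := hfg i i1 im.
have M11 : \sum_(1 <= i < m) t1 i * t1 (m - i)%N = \sum_(1 <= i < m) u1 i * u1 (m - i)%N.
  by apply: Mid => i i0 im; have [] := IHt i i0 im.
have M12 : \sum_(1 <= i < m) t1 i * t2 (m - i)%N = \sum_(1 <= i < m) u1 i * u2 (m - i)%N.
  by apply: Mid => i i0 im; have [? ? ? ? []] := IHt i i0 im.
have M13 : \sum_(1 <= i < m) t1 i * t3 (m - i)%N = \sum_(1 <= i < m) u1 i * u3 (m - i)%N.
  by apply: Mid => i i0 im; have [? ? ? ? []] := IHt i i0 im.
have M22 : \sum_(1 <= i < m) t2 i * t2 (m - i)%N = \sum_(1 <= i < m) u2 i * u2 (m - i)%N.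
  by apply: Mid => i i0 im; have [? ? ? ? []] := IHt i i0 im.
have [hu1 hu2 hu3] := U m.
have ht1 := h1 m; have ht2 := h2 m; have ht3 := h3 m.
rewrite /psder !psmul_split // M11 M12 M13 M22 sb T2 T3 in ht1 ht2 ht3.
rewrite /psder !psmul_split // u10 u20 u30 in hu1 hu2 hu3.
set l := a * m%:R.
have g1 : l * (t1 m - u1 m) = 2 * b * (t1 m - u1 m) - (t2 m - u2 m) / 12.
  by apply: (eq_from2 (k1 := 1) (k2 := -1) ht1 hu1); rewrite /l; field.
have g2 : l * (t2 m - u2 m) = 4 * b * (t2 m - u2 m) + 48 * b ^+ 2 * (t1 m - u1 m) - 6 * (t3 m - u3 m).
  by apply: (eq_from2 (k1 := 1) (k2 := -1) ht2 hu2); rewrite /l; field.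
have g3 : l * (t3 m - u3 m) = 6 * b * (t3 m - u3 m) + 48 * b ^+ 3 * (t1 m - u1 m) - 8 * b ^+ 2 * (t2 m - u2 m).
  by apply: (eq_from2 (k1 := 1) (k2 := -1) ht3 hu3); rewrite /l; field.
have [ky kz kk] := sys g1 g2 g3.
have mS : (m%:R : C) = (n.+1)%:R + 1 by rewrite natr1.
have l0 : l != 0 by rewrite /l mulf_neq0 // pnatr_eq0.
have l12 : l - 12 * b != 0.
  have -> : l - 12 * b = a * (n.+1)%:R by rewrite /l mS -ab; ring.
  by rewrite mulf_neq0 // pnatr_eq0.
have d1 : t1 m - u1 m = 0.
  move/eqP: kk; rewrite !mulf_eq0 (negbTE two) (negbTE l12) (negbTE a0) pnatr_eq0 /=.
  by move/eqP.
rewrite d1 !mulr0 in ky kz.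
by split; apply/eqP; rewrite -subr_eq0 ?d1 ?ky ?kz.
Qed.
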